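(* In a partial synchronized communication system whose communication graph is an $n\times m$ grid communication graph, two starving robots can never be (at the same time) on circles lying in the same row.
   Context: Model. A system consists of pairwise disjoint unit circles in the plane (trajectories) and a communication range $r>0$. Its communication graph $G$ has the circles as vertices, two adjacent iff the distance between their centres is at most $2+r$. Positions on a circle are angles (mod $2\pi$). For an edge $(i,j)$, the link position $\phi_{ij}$ is the angle of the point of $C_i$ closest to $C_j$. A schedule $F=(f,g)$ assigns each circle a starting angle $f(C_i)$ and direction $g(C_i)\in\{1,-1\}$; a robot following it on $C_i$ is at $f(C_i)+g(C_i)2\pi t$ at time $t$. $F$ is a synchronization schedule if $g(C_i)=-g(C_j)$ for adjacent circles and robots following $F$ on adjacent $C_i,C_j$ are at $\phi_{ij},\phi_{ji}$ at exactly the same times. A synchronized communication system (SCS) consists of robots, initially one per circle, following a synchronization schedule, with the switching rule: when a robot on $C_i$ reaches $\phi_{ij}$ and $C_j$ is empty, it instantly passes to $C_j$ and follows the schedule of $C_j$; if $C_j$ has a robot, they meet and each stays on its circle. A partial SCS arises by letting some robots leave (possibly at different times); remaining robots never leave. A surviving robot $u$ starves if every time $u$ arrives at a link position $\phi_{ij}$ of its current circle $C_i$, the circle $C_j$ is empty. Grid. The $n\times m$ grid communication graph consists of $nm$ unit circles, circle $(i,j)$ in row $i$ (rows horizontal) and column $j$ (columns vertical), centres on a square lattice, circle $(i,j)$ adjacent exactly to the existing circles $(i\pm1,j)$, $(i,j\pm1)$. *)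

(* Defs.v *)
From Stdlib Require Import Reals Lra Lia ZArith.
Open Scope R_scope.

(* A circle of the n x m grid is identified with its (row, column) pair. *)
Definition cell := (nat * nat)%type.

Definition in_grid (n m : nat) (c : cell) : Prop :=
  (fst c < n)%nat /\ (snd c < m)%nat.

Definition adj (n m : nat) (c c' : cell) : Prop :=
  in_grid n m c /\ in_grid n m c' /\
  ((fst c = fst c' /\ (snd c' = S (snd c) \/ snd c = S (snd c'))) \/
   (snd c = snd c' /\ (fst c' = S (fst c) \/ fst c = S (fst c')))).

(* Link position phi_{c c'}: angle of the point of C_c closest to C_c',
   i.e. the direction from the centre of c to the centre of c'.
   Columns increase to the right (angle 0), rows increase downwards
   (angle 3*PI/2). Only meaningful for adjacent c, c'. *)
Definition phi (c c' : cell) : R :=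
  if Nat.eqb (snd c') (S (snd c)) then 0
  else if Nat.eqb (snd c) (S (snd c')) then PI
  else if Nat.eqb (fst c') (S (fst c)) then 3 * PI / 2
  else PI / 2.

Definition angeq (a b : R) : Prop := exists k : Z, a - b = IZR k * (2 * PI).

Definition pos (f g : cell -> R) (c : cell) (t : R) : R :=
  f c + g c * (2 * PI) * t.

Definition sync_schedule (n m : nat) (f g : cell -> R) : Prop :=
  (forall c, in_grid n m c -> g c = 1 \/ g c = -1) /\
  (forall c c', adj n m c c' ->
     g c = - g c' /\
     (forall t, 0 <= t ->
        (angeq (pos f g c t) (phi c c') <-> angeq (pos f g c' t) (phi c' c)))).

(* Robots are named by their initial circle.  loc u t is the circle robot u
   is on at time t (after any switch happening at time t); L u is the time
   at which u leaves (None = u never leaves, i.e. u survives). *)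
Definition present (L : cell -> option R) (u : cell) (t : R) : Prop :=
  match L u with None => True | Some l => t < l end.

(* prev_at loc u t c: robot u arrives at time t on circle c, i.e. c is the
   circle it is on just before t (its initial circle at t = 0). *)
Definition prev_at (loc : cell -> R -> cell) (u : cell) (t : R) (c : cell) : Prop :=
  (t = 0 /\ c = u) \/
  (0 < t /\ exists eps, 0 < eps /\ forall s, t - eps < s < t -> loc u s = c).

Definition occupied (n m : nat) (loc : cell -> R -> cell) (L : cell -> option R)
    (c : cell) (t : R) : Prop :=
  exists v, in_grid n m v /\ present L v t /\ prev_at loc v t c.

Definition partial_scs_run (n m : nat) (f g : cell -> R)
    (loc : cell -> R -> cell) (L : cell -> option R) : Prop :=
  (* piecewise constant motion between circles: left limits exist ... *)
  (forall u t, in_grid n m u -> 0 <= t -> present L u t ->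
     exists c, prev_at loc u t c) /\
  (forall u t, in_grid n m u -> 0 <= t -> present L u t ->
     exists eps, 0 < eps /\ forall s, t <= s < t + eps -> loc u s = loc u t) /\
  (forall u t c, in_grid n m u -> 0 <= t -> present L u t -> prev_at loc u t c ->
     (forall c', adj n m c c' -> angeq (pos f g c t) (phi c c') ->
        ~ occupied n m loc L c' t -> loc u t = c') /\
     ((forall c', adj n m c c' -> angeq (pos f g c t) (phi c c') ->
        occupied n m loc L c' t) -> loc u t = c)).

Definition starves (n m : nat) (f g : cell -> R)
    (loc : cell -> R -> cell) (L : cell -> option R) (u : cell) : Prop :=
  L u = None /\
  forall t c c', 0 < t -> prev_at loc u t c -> adj n m c c' ->
    angeq (pos f g c t) (phi c c') -> ~ occupied n m loc L c' t.

(* Main.v *)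
From Stdlib Require Import Reals Lra Lia ZArith Classical.
Require Import Defs.
Open Scope R_scope.
Ltac zl := Z.div_mod_to_equations; lia.

Lemma angeq_refl a : angeq a a.
Proof. exists 0%Z. simpl. ring. Qed.
Lemma angeq_sym a b : angeq a b -> angeq b a.
Proof. intros [k H]. exists (-k)%Z. rewrite opp_IZR. lra. Qed.
Lemma angeq_trans a b c : angeq a b -> angeq b c -> angeq a c.
Proof. intros [k H] [l H']. exists (k+l)%Z. rewrite plus_IZR. lra. Qed.
Lemma angeq_add a b c d : angeq a b -> angeq c d -> angeq (a+c) (b+d).
Proof. intros [k H] [l H']. exists (k+l)%Z. rewrite plus_IZR. lra. Qed.
Lemma angeq_opp a b : angeq a b -> angeq (-a) (-b).
Proof. intros [k H]. exists (-k)%Z. rewrite opp_IZR. lra. Qed.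
Lemma angeq_k a k : angeq (a + IZR k * (2*PI)) a.
Proof. exists k. ring. Qed.
Lemma angeq_eq a b : a = b -> angeq a b.
Proof. intros ->; apply angeq_refl. Qed.

Lemma exists_pos_shift x : exists k : Z, 0 <= x + IZR k.
Proof. destruct (archimed (-x)) as [H _]. exists (up (-x)). lra. Qed.

Lemma sync_step (f g : cell -> R) c c' p p' :
  (g c = 1 \/ g c = -1) -> g c' = - g c ->
  (forall t, 0 <= t -> (angeq (pos f g c t) p <-> angeq (pos f g c' t) p')) ->
  angeq (f c' + f c) (p + p').
Proof.
  intros Hg Hg' Hs.
  set (x := g c * (p - f c) / (2*PI)).
  destruct (exists_pos_shift x) as [k Hk].
  set (t0 := x + IZR k).
  assert (HP : 0 < PI) by apply PI_RGT_0.
  assert (E1 : g c * (2*PI) * t0 = (p - f c) + IZR (if Rle_dec 0 (g c) then k else -k) * (2*PI)).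
  { unfold t0, x. destruct (Rle_dec 0 (g c)); destruct Hg as [Hg|Hg]; rewrite Hg in *;
    try lra; try rewrite opp_IZR; field; lra. }
  assert (A1 : angeq (pos f g c t0) p).
  { unfold pos. rewrite E1. exists (if Rle_dec 0 (g c) then k else -k)%Z. ring. }
  apply Hs in A1; [|unfold t0; lra].
  unfold pos in A1. rewrite Hg' in A1.
  replace (f c' + - g c * (2 * PI) * t0) with (f c' - g c * (2*PI) * t0) in A1 by ring.
  rewrite E1 in A1.
  destruct A1 as [z Hz]. exists (z + (if Rle_dec 0 (g c) then k else -k))%Z.
  rewrite plus_IZR. lra.
Qed.

Definition sig (s : Z) (c : cell) : Z := if Nat.even (fst c + snd c) then s else (- s)%Z.

Definition CF (f g : cell -> R) tau s c :=
  g c = IZR (sig s c) /\ angeq (f c) (- g c * (2*PI) * tau + PI * INR (snd c)).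

Lemma phi_right i j : phi (i,j) (i,S j) = 0.
Proof. unfold phi; simpl. rewrite Nat.eqb_refl. reflexivity. Qed.
Lemma phi_left i j : phi (i,S j) (i,j) = PI.
Proof. unfold phi; simpl. replace (Nat.eqb j (S (S j))) with false.
  rewrite Nat.eqb_refl. reflexivity. symmetry; apply Nat.eqb_neq; lia. Qed.
Lemma phi_down i j : phi (i,j) (S i,j) = 3*PI/2.
Proof. unfold phi; simpl. replace (Nat.eqb j (S j)) with false.
  rewrite Nat.eqb_refl. reflexivity. symmetry; apply Nat.eqb_neq; lia. Qed.
Lemma phi_up i j : phi (S i,j) (i,j) = PI/2.
Proof. unfold phi; simpl. replace (Nat.eqb j (S j)) with false.
  replace (Nat.eqb i (S (S i))) with false. reflexivity.
  symmetry; apply Nat.eqb_neq; lia. symmetry; apply Nat.eqb_neq; lia. Qed.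

Lemma sig_flip_r s i j : sig s (i, S j) = (- sig s (i,j))%Z.
Proof. unfold sig; cbn [fst snd]. rewrite Nat.add_succ_r, Nat.even_succ, <- Nat.negb_even.
  destruct (Nat.even (i+j)); simpl; lia. Qed.
Lemma sig_flip_d s i j : sig s (S i, j) = (- sig s (i,j))%Z.
Proof. unfold sig; cbn [fst snd]. rewrite Nat.add_succ_l, Nat.even_succ, <- Nat.negb_even.
  destruct (Nat.even (i+j)); simpl; lia. Qed.

Lemma CF_right n m f g tau s i j : sync_schedule n m f g ->
  in_grid n m (i, S j) -> CF f g tau s (i,j) -> CF f g tau s (i, S j).
Proof.
  intros [Hg Hs] Hin [H1 H2].
  assert (Hadj : adj n m (i,j) (i,S j)).
  { unfold adj, in_grid in *; simpl in *. repeat split; try lia. }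
  destruct (Hs _ _ Hadj) as [Hgg Hiff].
  assert (Hgc : g (i,j) = 1 \/ g (i,j) = -1) by (apply Hg; unfold in_grid in *; simpl in *; lia).
  assert (Hgg2 : g (i,S j) = - g (i,j)) by lra.
  assert (Hst := sync_step f g _ _ _ _ Hgc Hgg2 Hiff).
  rewrite phi_right, phi_left in Hst.
  split.
  - rewrite sig_flip_r, opp_IZR, <- H1. lra.
  - assert (Hfc' : angeq (f (i, S j)) (PI - f (i,j))).
    { destruct Hst as [k Hk]. exists k. lra. }
    eapply angeq_trans. apply Hfc'.
    eapply angeq_trans. apply (angeq_add _ _ _ _ (angeq_refl PI) (angeq_opp _ _ H2)).
    exists (- Z.of_nat j)%Z. rewrite opp_IZR, <- INR_IZR_INZ. simpl snd. rewrite S_INR, Hgg2. ring.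
Qed.

Lemma CF_down n m f g tau s i j : sync_schedule n m f g ->
  in_grid n m (S i, j) -> CF f g tau s (i,j) -> CF f g tau s (S i, j).
Proof.
  intros [Hg Hs] Hin [H1 H2].
  assert (Hadj : adj n m (i,j) (S i,j)).
  { unfold adj, in_grid in *; simpl in *. repeat split; try lia. }
  destruct (Hs _ _ Hadj) as [Hgg Hiff].
  assert (Hgc : g (i,j) = 1 \/ g (i,j) = -1) by (apply Hg; unfold in_grid in *; simpl in *; lia).
  assert (Hgg2 : g (S i, j) = - g (i,j)) by lra.
  assert (Hst := sync_step f g _ _ _ _ Hgc Hgg2 Hiff).
  rewrite phi_down, phi_up in Hst.
  split.
  - rewrite sig_flip_d, opp_IZR, <- H1. lra.
  - assert (Hfc' : angeq (f (S i, j)) (- f (i,j))).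
    { destruct Hst as [k Hk]. exists (k+1)%Z. rewrite plus_IZR. lra. }
    eapply angeq_trans. apply Hfc'.
    eapply angeq_trans. apply (angeq_opp _ _ H2).
    exists (- Z.of_nat j)%Z. rewrite opp_IZR, <- INR_IZR_INZ. simpl snd. rewrite Hgg2. ring.
Qed.

Lemma closed_form n m f g : sync_schedule n m f g -> (0 < n)%nat -> (0 < m)%nat ->
  exists tau s, (s = 1 \/ s = -1)%Z /\ forall c, in_grid n m c -> CF f g tau s c.
Proof.
  intros Hsync Hn Hm.
  assert (Hg00 : g (0,0)%nat = 1 \/ g (0,0)%nat = -1).
  { apply (proj1 Hsync). unfold in_grid; simpl; lia. }
  assert (HP : 0 < PI) by apply PI_RGT_0.
  exists (- f (0,0)%nat * g (0,0)%nat / (2*PI)).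
  exists (if Rle_dec 0 (g (0,0)%nat) then 1%Z else (-1)%Z).
  split. { destruct (Rle_dec _ _); auto. }
  assert (C00 : CF f g (- f (0,0)%nat * g (0,0)%nat / (2*PI))
    (if Rle_dec 0 (g (0,0)%nat) then 1%Z else (-1)%Z) (0,0)%nat).
  { split.
    - unfold sig; simpl. destruct (Rle_dec _ _); destruct Hg00 as [H|H]; rewrite H in *; simpl; lra.
    - apply angeq_eq. simpl snd. simpl INR.
      destruct Hg00 as [H|H]; rewrite H; field; lra. }
  intros [i j] Hin.
  assert (Row : forall j, (j < m)%nat -> CF f g (- f (0,0)%nat * g (0,0)%nat / (2*PI))
    (if Rle_dec 0 (g (0,0)%nat) then 1%Z else (-1)%Z) (0%nat,j)).
  { induction j0; intros. exact C00. apply (CF_right n m); auto.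
    unfold in_grid; simpl; lia. apply IHj0; lia. }
  unfold in_grid in Hin; simpl in Hin.
  revert Hin. induction i; intros Hin. apply Row; lia.
  apply (CF_down n m); [exact Hsync| unfold in_grid; simpl; lia | apply IHi; split; lia].
Qed.

Definition E (tau : R) (K : Z) : R := tau + IZR K / 4.

Lemma sig_pm s c : (s = 1 \/ s = -1)%Z -> (sig s c = 1 \/ sig s c = -1)%Z.
Proof. unfold sig; destruct (Nat.even _); lia. Qed.

Lemma pi_zero X : PI * X = 0 -> X = 0.
Proof. intros H. destruct (Rmult_integral _ _ H) as [H'|H']; auto.
  pose proof PI_RGT_0; lra. Qed.

Lemma link_event f g tau s c t q : (s = 1 \/ s = -1)%Z -> CF f g tau s c ->
  angeq (pos f g c t) (PI/2 * IZR q) ->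
  exists K, t = E tau K /\ exists z, (sig s c * K + 2 * Z.of_nat (snd c) - q = 4 * z)%Z.
Proof.
  intros Hs [Hg [k1 H1]] [k2 H2].
  unfold pos in H2. rewrite Hg in H1, H2.
  rewrite INR_IZR_INZ in H1.
  destruct (sig_pm s c Hs) as [Hsg|Hsg]; rewrite Hsg in *.
  - exists (4 * (k2 - k1) - 2 * Z.of_nat (snd c) + q)%Z. split.
    + unfold E. rewrite !plus_IZR, !minus_IZR, !mult_IZR, !minus_IZR.
      assert (PI * (4*(t - tau) - (4*(IZR k2 - IZR k1) - 2 * IZR (Z.of_nat (snd c)) + IZR q)) = 0).
      { simpl IZR in *. lra. }
      apply pi_zero in H. simpl IZR. lra.
    + exists (k2 - k1)%Z. lia.
  - exists (- (4 * (k2 - k1) - 2 * Z.of_nat (snd c) + q))%Z. split.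
    + unfold E. rewrite opp_IZR, !plus_IZR, !minus_IZR, !mult_IZR, !minus_IZR.
      assert (PI * (-4*(t - tau) - (4*(IZR k2 - IZR k1) - 2 * IZR (Z.of_nat (snd c)) + IZR q)) = 0).
      { simpl IZR in *. lra. }
      apply pi_zero in H. simpl IZR. lra.
    + exists (k2 - k1)%Z. lia.
Qed.

Lemma event_link f g tau s c K q : (s = 1 \/ s = -1)%Z -> CF f g tau s c ->
  (exists z, (sig s c * K + 2 * Z.of_nat (snd c) - q = 4 * z)%Z) ->
  angeq (pos f g c (E tau K)) (PI/2 * IZR q).
Proof.
  intros Hs [Hg [k1 H1]] [z Hz].
  unfold pos. rewrite Hg in *. rewrite INR_IZR_INZ in H1.
  exists (k1 + z)%Z.
  assert (Hq : IZR q = IZR (sig s c) * IZR K + 2 * IZR (Z.of_nat (snd c)) - 4 * IZR z).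
  { rewrite <- mult_IZR. assert (q = sig s c * K + 2 * Z.of_nat (snd c) - 4 * z)%Z by lia.
    rewrite H. rewrite minus_IZR, plus_IZR, !mult_IZR. reflexivity. }
  rewrite Hq, plus_IZR. unfold E.
  destruct (sig_pm s c Hs) as [Hsg|Hsg]; rewrite Hsg in *; simpl IZR in *; lra.
Qed.

Definition face (s : Z) (c : cell) (K : Z) : Z :=
  ((sig s c) * K + 2 * Z.of_nat (snd c)) mod 4.

Definition code (c c' : cell) : Z :=
  if Nat.eqb (snd c') (S (snd c)) then 0
  else if Nat.eqb (snd c) (S (snd c')) then 2
  else if Nat.eqb (fst c') (S (fst c)) then 3
  else 1.

Lemma phi_code c c' : phi c c' = PI/2 * IZR (code c c').
Proof. unfold phi, code. destruct (Nat.eqb _ _); [simpl; ring|].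
  destruct (Nat.eqb _ _); [simpl; field|].
  destruct (Nat.eqb _ _); simpl; field. Qed.

Lemma code_r i j : code (i,j) (i,S j) = 0%Z.
Proof. unfold code; simpl. rewrite Nat.eqb_refl. reflexivity. Qed.
Lemma code_l i j : code (i,S j) (i,j) = 2%Z.
Proof. unfold code; simpl. replace (Nat.eqb j (S (S j))) with false.
  rewrite Nat.eqb_refl. reflexivity. symmetry; apply Nat.eqb_neq; lia. Qed.
Lemma code_d i j : code (i,j) (S i,j) = 3%Z.
Proof. unfold code; simpl. replace (Nat.eqb j (S j)) with false.
  rewrite Nat.eqb_refl. reflexivity. symmetry; apply Nat.eqb_neq; lia. Qed.
Lemma code_u i j : code (S i,j) (i,j) = 1%Z.
Proof. unfold code; simpl. replace (Nat.eqb j (S j)) with false.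
  replace (Nat.eqb i (S (S i))) with false. reflexivity.
  symmetry; apply Nat.eqb_neq; lia. symmetry; apply Nat.eqb_neq; lia. Qed.

Lemma face_char s c K q : (0 <= q < 4)%Z ->
  ((exists z, sig s c * K + 2 * Z.of_nat (snd c) - q = 4 * z)%Z <-> q = face s c K).
Proof. intros Hq. unfold face. generalize (sig s c * K)%Z; intros X. split.
  - intros [z Hz]. zl.
  - intros ->. exists ((X + 2 * Z.of_nat (snd c)) / 4)%Z. zl. Qed.

Lemma face_range s c K : (0 <= face s c K < 4)%Z.
Proof. unfold face. generalize (sig s c * K)%Z; intros X. zl. Qed.

Lemma face_even s c K : (s = 1 \/ s = -1)%Z -> Z.even K = true ->
  face s c K = ((K + 2 * Z.of_nat (snd c)) mod 4)%Z.
Proof. intros Hs HK. unfold face. apply Z.even_spec in HK. destruct HK as [l ->].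
  destruct (sig_pm s c Hs) as [H|H]; rewrite H; zl. Qed.

Lemma face_odd s c K : (s = 1 \/ s = -1)%Z -> Z.even K = false ->
  face s c K = ((s * K + 2 * Z.of_nat (fst c)) mod 4)%Z.
Proof. intros Hs HK. unfold face, sig.
  assert (HK' : Z.odd K = true) by (rewrite <- Z.negb_even, HK; reflexivity).
  apply Z.odd_spec in HK'. destruct HK' as [l ->].
  destruct c as [i j]; cbn [fst snd].
  destruct (Nat.Even_or_Odd (i+j)) as [[p Hp]|[p Hp]].
  - replace (Nat.even (i+j)) with true by (symmetry; apply Nat.even_spec; exists p; lia).
    assert (Z.of_nat i + Z.of_nat j = 2 * Z.of_nat p)%Z by lia.
    destruct Hs as [-> | ->]; zl.
  - replace (Nat.even (i+j)) with false.
    assert (Z.of_nat i + Z.of_nat j = 2 * Z.of_nat p + 1)%Z by lia.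
    destruct Hs as [-> | ->]; zl.
    rewrite <- Nat.negb_odd. replace (Nat.odd (i+j)) with true. reflexivity.
    symmetry; apply Nat.odd_spec; exists p; lia.
Qed.

Definition nb (c : cell) (q : Z) : cell :=
  if Z.eqb q 0 then (fst c, S (snd c))
  else if Z.eqb q 1 then (pred (fst c), snd c)
  else if Z.eqb q 2 then (fst c, pred (snd c))
  else (S (fst c), snd c).

Definition hasnb (n m : nat) (c : cell) (q : Z) : bool :=
  if Z.eqb q 0 then Nat.ltb (S (snd c)) m
  else if Z.eqb q 1 then Nat.ltb 0 (fst c)
  else if Z.eqb q 2 then Nat.ltb 0 (snd c)
  else Nat.ltb (S (fst c)) n.

Definition next (n m : nat) (s : Z) (c : cell) (K : Z) : cell :=
  if hasnb n m c (face s c K) then nb c (face s c K) else c.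

Lemma adj_r n m i j : (i < n)%nat -> (S j < m)%nat -> adj n m (i,j) (i,S j).
Proof. intros. unfold adj, in_grid; cbn [fst snd]. split; [lia|split;[lia|]]. left; split; auto. Qed.
Lemma adj_l n m i j : (i < n)%nat -> (S j < m)%nat -> adj n m (i,S j) (i,j).
Proof. intros. unfold adj, in_grid; cbn [fst snd]. split; [lia|split;[lia|]]. left; split; auto. Qed.
Lemma adj_d n m i j : (S i < n)%nat -> (j < m)%nat -> adj n m (i,j) (S i,j).
Proof. intros. unfold adj, in_grid; cbn [fst snd]. split; [lia|split;[lia|]]. right; split; auto. Qed.
Lemma adj_u n m i j : (S i < n)%nat -> (j < m)%nat -> adj n m (S i,j) (i,j).
Proof. intros. unfold adj, in_grid; cbn [fst snd]. split; [lia|split;[lia|]]. right; split; auto. Qed.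

Lemma nb_adj n m c q : in_grid n m c -> (0 <= q < 4)%Z -> hasnb n m c q = true ->
  adj n m c (nb c q) /\ code c (nb c q) = q.
Proof.
  destruct c as [i j]. unfold in_grid, hasnb, nb. cbn [fst snd]. intros Hin Hq.
  destruct (Z.eqb_spec q 0); [intros H; apply Nat.ltb_lt in H; subst; rewrite code_r;
    split; auto; apply adj_r; lia|].
  destruct (Z.eqb_spec q 1); [intros H; apply Nat.ltb_lt in H; subst;
    destruct i as [|i]; [lia|]; cbn [pred]; rewrite code_u; split; auto; apply adj_u; lia|].
  destruct (Z.eqb_spec q 2); [intros H; apply Nat.ltb_lt in H; subst;
    destruct j as [|j]; [lia|]; cbn [pred]; rewrite code_l; split; auto; apply adj_l; lia|].
  intros H; apply Nat.ltb_lt in H. assert (q = 3%Z) by lia. subst. rewrite code_d;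
    split; auto; apply adj_d; lia.
Qed.

Lemma adj_nb n m c c' : adj n m c c' ->
  c' = nb c (code c c') /\ hasnb n m c (code c c') = true.
Proof.
  destruct c as [i j], c' as [i' j']. unfold adj, in_grid. cbn [fst snd].
  intros [H1 [H2 [[-> [->| ->]]|[-> [->| ->]]]]].
  - rewrite code_r. unfold nb, hasnb; simpl. split; auto; apply Nat.ltb_lt; lia.
  - rewrite code_l. unfold nb, hasnb; simpl. split; auto; apply Nat.ltb_lt; lia.
  - rewrite code_d. unfold nb, hasnb; simpl. split; auto; apply Nat.ltb_lt; lia.
  - rewrite code_u. unfold nb, hasnb; simpl. split; auto; apply Nat.ltb_lt; lia.
Qed.

Lemma next_grid n m s c K : in_grid n m c -> in_grid n m (next n m s c K).
Proof. intros H. unfold next. destruct (hasnb _ _ _ _) eqn:E; auto.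
  destruct (nb_adj n m c (face s c K) H (face_range _ _ _) E) as [[_ [A _]] _]. exact A. Qed.
Lemma face_sym n m s a b K : (s = 1 \/ s = -1)%Z -> adj n m a b ->
  face s a K = code a b -> face s b K = code b a.
Proof.
  intros Hs. destruct a as [i j], b as [i' j']. unfold adj, in_grid. cbn [fst snd].
  intros [H1 [H2 [[-> [->| ->]]|[-> [->| ->]]]]]; unfold face; cbn [fst snd].
  - rewrite code_r, code_l, sig_flip_r. destruct (sig_pm s (i',j) Hs) as [E|E]; rewrite E;
    rewrite Nat2Z.inj_succ; zl.
  - rewrite code_r, code_l, sig_flip_r. destruct (sig_pm s (i',j') Hs) as [E|E]; rewrite E;
    rewrite Nat2Z.inj_succ; zl.
  - rewrite code_d, code_u, sig_flip_d. destruct (sig_pm s (i,j') Hs) as [E|E]; rewrite E; zl.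
  - rewrite code_d, code_u, sig_flip_d. destruct (sig_pm s (i',j') Hs) as [E|E]; rewrite E; zl.
Qed.

Fixpoint traj (n m : nat) (s : Z) (c : cell) (K : Z) (N : nat) : cell :=
  match N with
  | O => c
  | S N' => next n m s (traj n m s c K N') (K + Z.of_nat N')
  end.

Lemma traj_shift n m s c K N1 N2 :
  traj n m s c K (N1 + N2) = traj n m s (traj n m s c K N1) (K + Z.of_nat N1) N2.
Proof. induction N2; simpl. rewrite Nat.add_0_r; reflexivity.
  rewrite Nat.add_succ_r. simpl. rewrite IHN2. f_equal. lia. Qed.

Lemma traj_grid n m s c K N : in_grid n m c -> in_grid n m (traj n m s c K N).
Proof. intros H; induction N; simpl; auto. apply next_grid; auto. Qed.

Definition meet n m s a b K := adj n m a b /\ face s a K = code a b.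

Lemma adj_sym n m a b : adj n m a b -> adj n m b a.
Proof. unfold adj. intros [H1 [H2 H3]]. split; auto. split; auto. lia. Qed.

Lemma next_inj n m s a b K : (s = 1 \/ s = -1)%Z -> in_grid n m a -> in_grid n m b -> a <> b ->
  ~ meet n m s a b K -> ~ meet n m s b a K -> next n m s a K <> next n m s b K.
Proof.
  intros Hs Ha Hb Hab Hm1 Hm2. unfold next.
  destruct (hasnb n m a (face s a K)) eqn:Ea; destruct (hasnb n m b (face s b K)) eqn:Eb.
  - destruct (nb_adj n m a _ Ha (face_range _ _ _) Ea) as [A1 C1].
    destruct (nb_adj n m b _ Hb (face_range _ _ _) Eb) as [A2 C2].
    intros Heq. rewrite <- Heq in A2, C2.
    set (c := nb a (face s a K)) in *.
    assert (F1 : face s c K = code c a) by (apply (face_sym n m s a c K Hs A1); auto).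
    assert (F2 : face s c K = code c b) by (apply (face_sym n m s b c K Hs A2); auto).
    destruct (adj_nb n m c a (adj_sym _ _ _ _ A1)) as [E1 _].
    destruct (adj_nb n m c b (adj_sym _ _ _ _ A2)) as [E2 _].
    apply Hab. rewrite E1, E2, <- F1, <- F2. reflexivity.
  - destruct (nb_adj n m a _ Ha (face_range _ _ _) Ea) as [A1 C1].
    intros Heq. apply Hm1. rewrite Heq in A1, C1. split; auto.
  - destruct (nb_adj n m b _ Hb (face_range _ _ _) Eb) as [A2 C2].
    intros Heq. apply Hm2. rewrite <- Heq in A2, C2. split; auto.
  - exact Hab.
Qed.

Lemma next_even n m s c K : (s = 1 \/ s = -1)%Z -> Z.even K = true ->
  fst (next n m s c K) = fst c /\
  snd (next n m s c K) =
    if Z.eqb ((K + 2 * Z.of_nat (snd c)) mod 4) 0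
    then (if Nat.ltb (S (snd c)) m then S (snd c) else snd c)
    else (if Nat.ltb 0 (snd c) then pred (snd c) else snd c).
Proof.
  intros Hs HK. unfold next. rewrite (face_even s c K Hs HK).
  assert (Hr : ((K + 2 * Z.of_nat (snd c)) mod 4 = 0 \/ (K + 2 * Z.of_nat (snd c)) mod 4 = 2)%Z).
  { apply Z.even_spec in HK. destruct HK as [l ->]. zl. }
  destruct Hr as [Hr|Hr]; rewrite Hr; unfold hasnb, nb; simpl;
    destruct (Nat.ltb _ _); simpl; auto.
Qed.

Lemma next_odd n m s c K : (s = 1 \/ s = -1)%Z -> Z.even K = false ->
  snd (next n m s c K) = snd c /\
  fst (next n m s c K) =
    if Z.eqb ((s * K + 2 * Z.of_nat (fst c)) mod 4) 1
    then (if Nat.ltb 0 (fst c) then pred (fst c) else fst c)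
    else (if Nat.ltb (S (fst c)) n then S (fst c) else fst c).
Proof.
  intros Hs HK. unfold next. rewrite (face_odd s c K Hs HK).
  assert (Hr : ((s * K + 2 * Z.of_nat (fst c)) mod 4 = 1 \/ (s * K + 2 * Z.of_nat (fst c)) mod 4 = 3)%Z).
  { assert (HK' : Z.odd K = true) by (rewrite <- Z.negb_even, HK; reflexivity).
    apply Z.odd_spec in HK'. destruct HK' as [l ->]. destruct Hs as [-> | ->]; zl. }
  destruct Hr as [Hr|Hr]; rewrite Hr; unfold hasnb, nb; simpl;
    destruct (Nat.ltb _ _); simpl; auto.
Qed.

Lemma order_step n m s a b K : (s = 1 \/ s = -1)%Z -> in_grid n m a -> in_grid n m b ->
  fst a = fst b -> (snd a < snd b)%nat -> Z.even K = true ->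
  ~ meet n m s a b K -> ~ meet n m s b a K ->
  (snd (next n m s a K) < snd (next n m s b K))%nat.
Proof.
  intros Hs Ha Hb Hrow Hlt HK Hm1 Hm2.
  destruct a as [i ja], b as [i' jb]. cbn [fst snd] in *. subst i'.
  assert (Hadj : jb = S ja -> ((K + 2 * Z.of_nat ja) mod 4 <> 0)%Z /\ ((K + 2 * Z.of_nat jb) mod 4 <> 2)%Z).
  { intros ->. unfold in_grid in *; cbn [fst snd] in *.
    split; intros E.
    - apply Hm1. split. apply adj_r; lia. rewrite code_r, face_even; auto.
    - apply Hm2. split. apply adj_l; lia. rewrite code_l, face_even; auto. }
  destruct (next_even n m s (i,ja) K Hs HK) as [_ ->].
  destruct (next_even n m s (i,jb) K Hs HK) as [_ ->]. cbn [fst snd].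
  apply Z.even_spec in HK. destruct HK as [l HK].
  unfold in_grid in *; cbn [fst snd] in *.
  destruct (Z.eqb_spec ((K + 2 * Z.of_nat ja) mod 4) 0);
  destruct (Z.eqb_spec ((K + 2 * Z.of_nat jb) mod 4) 0);
  repeat match goal with |- context [Nat.ltb ?x ?y] => destruct (Nat.ltb_spec x y) end;
  try lia;
  destruct (Nat.eq_dec jb (S ja)) as [E|E]; try (destruct (Hadj E); zl);
  try zl.
Qed.

Lemma traj2 n m s a K : traj n m s a K 2 = next n m s (next n m s a K) (K+1).
Proof. simpl. rewrite Z.add_0_r. reflexivity. Qed.

Lemma even2 K : Z.even (K + 2) = Z.even K.
Proof. rewrite Z.even_add. simpl. destruct (Z.even K); reflexivity. Qed.
Lemma even1 K : Z.even (K + 1) = negb (Z.even K).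
Proof. rewrite Z.even_add. simpl. destruct (Z.even K); reflexivity. Qed.

Lemma reach_right n m s d : (s = 1 \/ s = -1)%Z -> forall a K, in_grid n m a -> Z.even K = true ->
  ((K + 2 * Z.of_nat (snd a)) mod 4 = 0)%Z -> S (snd a + d) = m ->
  exists N, snd (traj n m s a K N) = (snd a + d)%nat.
Proof.
  intros Hs. induction d; intros a K Ha HK Hr Hm.
  - exists O. simpl. lia.
  - set (a2 := traj n m s a K 2).
    assert (E2 : snd a2 = S (snd a)).
    { unfold a2. rewrite traj2. rewrite (proj1 (next_odd n m s _ (K+1) Hs ltac:(rewrite even1, HK; reflexivity))).
      rewrite (proj2 (next_even n m s a K Hs HK)). rewrite Hr. simpl.
      replace (Nat.ltb (S (snd a)) m) with true by (symmetry; apply Nat.ltb_lt; lia). reflexivity. }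
    destruct (IHd a2 (K + 2)%Z) as [N HN].
    + apply traj_grid; auto.
    + rewrite even2; auto.
    + rewrite E2, Nat2Z.inj_succ. zl.
    + lia.
    + exists (2 + N)%nat. rewrite traj_shift. fold a2. replace (K + Z.of_nat 2)%Z with (K+2)%Z by reflexivity.
      rewrite HN. lia.
Qed.

Lemma reach_left n m s j : (s = 1 \/ s = -1)%Z -> forall a K, snd a = j -> in_grid n m a ->
  Z.even K = true -> ((K + 2 * Z.of_nat j) mod 4 = 2)%Z ->
  exists N, in_grid n m (traj n m s a K N) /\ Z.even (K + Z.of_nat N) = true /\
    ((K + Z.of_nat N + 2 * Z.of_nat (snd (traj n m s a K N))) mod 4 = 0)%Z.
Proof.
  intros Hs. induction j; intros a K Hj Ha HK Hr.
  - exists 2%nat. split. apply traj_grid; auto. split. simpl Z.of_nat. rewrite even2; auto.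
    rewrite traj2. rewrite (proj1 (next_odd n m s _ (K+1) Hs ltac:(rewrite even1, HK; reflexivity))).
    rewrite (proj2 (next_even n m s a K Hs HK)). rewrite Hj in *. simpl Z.of_nat in *.
    repeat match goal with |- context [(?x =? ?y)%Z] => destruct (Z.eqb_spec x y) | |- context [Nat.ltb ?x ?y] => destruct (Nat.ltb_spec x y) end; simpl Z.of_nat; zl.
  - set (a2 := traj n m s a K 2).
    assert (E2 : snd a2 = j).
    { unfold a2. rewrite traj2. rewrite (proj1 (next_odd n m s _ (K+1) Hs ltac:(rewrite even1, HK; reflexivity))).
      rewrite (proj2 (next_even n m s a K Hs HK)). rewrite Hj.
      replace ((K + 2 * Z.of_nat (S j)) mod 4 =? 0)%Z with false by (symmetry; apply Z.eqb_neq; zl).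
      simpl. reflexivity. }
    destruct (IHj a2 (K + 2)%Z E2) as [N HN].
    + apply traj_grid; auto.
    + rewrite even2; auto.
    + rewrite Nat2Z.inj_succ in Hr. zl.
    + exists (2 + N)%nat. rewrite traj_shift. fold a2.
      replace (K + Z.of_nat (2 + N))%Z with (K + Z.of_nat 2 + Z.of_nat N)%Z by lia.
      exact HN.
Qed.

Lemma reach_even n m s a K : (s = 1 \/ s = -1)%Z -> in_grid n m a -> Z.even K = true ->
  exists N, snd (traj n m s a K N) = pred m.
Proof.
  intros Hs Ha HK.
  assert (Hr : ((K + 2 * Z.of_nat (snd a)) mod 4 = 0 \/ (K + 2 * Z.of_nat (snd a)) mod 4 = 2)%Z).
  { apply Z.even_spec in HK. destruct HK as [l ->]. zl. }
  destruct Hr as [Hr|Hr].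
  - destruct (reach_right n m s (pred m - snd a) Hs a K Ha HK Hr) as [N HN].
    unfold in_grid in Ha; lia. exists N. rewrite HN. unfold in_grid in Ha; lia.
  - destruct (reach_left n m s (snd a) Hs a K eq_refl Ha HK Hr) as [N1 [G1 [E1 R1]]].
    set (a1 := traj n m s a K N1) in *.
    destruct (reach_right n m s (pred m - snd a1) Hs a1 _ G1 E1 R1) as [N2 HN2].
    unfold in_grid in G1; lia.
    exists (N1 + N2)%nat. rewrite traj_shift. fold a1. rewrite HN2. unfold in_grid in G1; lia.
Qed.

Lemma reach n m s a K : (s = 1 \/ s = -1)%Z -> in_grid n m a ->
  exists N, snd (traj n m s a K N) = pred m.
Proof.
  intros Hs Ha. destruct (Z.even K) eqn:HK.
  - apply reach_even; auto.
  - destruct (reach_even n m s (traj n m s a K 1) (K + Z.of_nat 1) Hs) as [N HN].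
    apply traj_grid; auto. simpl Z.of_nat. rewrite even1, HK. reflexivity.
    exists (1 + N)%nat. rewrite traj_shift. exact HN.
Qed.

Lemma same_row_aux n m s a b K : (s = 1 \/ s = -1)%Z -> in_grid n m a -> in_grid n m b ->
  fst a = fst b -> (snd a < snd b)%nat ->
  exists N, meet n m s (traj n m s a K N) (traj n m s b K N) (K + Z.of_nat N) \/
            meet n m s (traj n m s b K N) (traj n m s a K N) (K + Z.of_nat N).
Proof.
  intros Hs Ha Hb Hrow Hlt. apply NNPP. intros Hno.
  assert (Inv : forall N, fst (traj n m s a K N) = fst (traj n m s b K N) /\
                          (snd (traj n m s a K N) < snd (traj n m s b K N))%nat).
  { induction N as [|N [IH1 IH2]]; [simpl; auto|].
    simpl. destruct (Z.even (K + Z.of_nat N)) eqn:HK.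
    - rewrite (proj1 (next_even n m s _ _ Hs HK)), (proj1 (next_even n m s (traj n m s b K N) _ Hs HK)).
      split; auto. apply order_step; auto; try apply traj_grid; auto.
      intros Hm; apply Hno; exists N; left; exact Hm.
      intros Hm; apply Hno; exists N; right; exact Hm.
    - destruct (next_odd n m s (traj n m s a K N) _ Hs HK) as [A1 A2].
      destruct (next_odd n m s (traj n m s b K N) _ Hs HK) as [B1 B2].
      rewrite A1, A2, B1, B2, IH1. split; auto. }
  destruct (reach n m s a K Hs Ha) as [N HN].
  destruct (Inv N) as [_ I2].
  assert (G := traj_grid n m s b K N Hb). unfold in_grid in G. lia.
Qed.

Lemma same_row_meet n m s a b K : (s = 1 \/ s = -1)%Z -> in_grid n m a -> in_grid n m b ->
  fst a = fst b -> a <> b ->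
  exists N, meet n m s (traj n m s a K N) (traj n m s b K N) (K + Z.of_nat N) \/
            meet n m s (traj n m s b K N) (traj n m s a K N) (K + Z.of_nat N).
Proof.
  intros Hs Ha Hb Hrow Hab.
  destruct (Nat.lt_trichotomy (snd a) (snd b)) as [H|[H|H]].
  - apply same_row_aux; auto.
  - exfalso. apply Hab. destruct a, b; simpl in *; subst; reflexivity.
  - destruct (same_row_aux n m s b a K Hs Hb Ha (eq_sym Hrow) H) as [N HN].
    exists N. tauto.
Qed.

Lemma const_interval {A : Type} (h : R -> A) a b : a <= b ->
  (forall t, a <= t <= b -> exists e, 0 < e /\ forall s, t <= s < t + e -> h s = h t) ->
  (forall t, a < t <= b -> exists e, 0 < e /\ forall s, t - e < s < t -> h s = h t) ->
  h b = h a.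
Proof.
  intros Hab HR HL.
  set (S := fun x => a <= x <= b /\ forall s, a <= s <= x -> h s = h a).
  assert (Sb : bound S) by (exists b; intros x [Hx _]; lra).
  assert (Sa : exists x, S x) by (exists a; split; [lra| intros s Hs; replace s with a by lra; reflexivity]).
  destruct (completeness S Sb Sa) as [M [HM1 HM2]].
  assert (aM : a <= M) by (apply HM1; destruct Sa as [x Hx]; unfold S; split; [lra|]; intros s Hs; replace s with a by lra; reflexivity).
  assert (Mb : M <= b) by (apply HM2; intros x [Hx _]; lra).
  assert (Below : forall s, a <= s < M -> h s = h a).
  { intros s Hs. apply NNPP. intros Hne.
    assert (M <= s). { apply HM2. intros x [Hx1 Hx2]. destruct (Rle_dec x s); auto.
      exfalso. apply Hne. apply Hx2. lra. }
    lra. }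
  assert (AtM : h M = h a).
  { destruct (Req_dec M a) as [->|HMa]; auto.
    destruct (HL M ltac:(lra)) as [e [He Hc]].
    set (s := Rmax a (M - e/2)).
    assert (a <= s) by apply Rmax_l.
    assert (s < M) by (unfold s; apply Rmax_lub_lt; lra).
    assert (M - e/2 <= s) by apply Rmax_r.
    rewrite <- (Hc s) by lra. apply Below; lra. }
  destruct (Req_dec M b) as [<-|HMb]; auto.
  exfalso.
  destruct (HR M ltac:(lra)) as [e [He Hc]].
  set (x := Rmin b (M + e/2)).
  assert (x <= b) by apply Rmin_l.
  assert (M < x) by (unfold x; apply Rmin_glb_lt; lra).
  assert (x <= M + e/2) by apply Rmin_r.
  assert (S x).
  { split. lra. intros s Hs. destruct (Rlt_dec s M). apply Below; lra.
    rewrite Hc by lra. exact AtM. }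
  assert (x <= M) by (apply HM1; auto). lra.
Qed.

Lemma code_range c c' : (0 <= code c c' < 4)%Z.
Proof. unfold code. repeat (destruct (Nat.eqb _ _)); lia. Qed.

Lemma link_at_event f g tau s c c' t : (s = 1 \/ s = -1)%Z -> CF f g tau s c ->
  angeq (pos f g c t) (phi c c') -> exists K, t = E tau K /\ code c c' = face s c K.
Proof.
  intros Hs HC H. rewrite phi_code in H.
  destruct (link_event f g tau s c t _ Hs HC H) as [K [-> HK]].
  exists K. split; auto. apply face_char; auto. apply code_range.
Qed.

Lemma event_at_face f g tau s c c' K : (s = 1 \/ s = -1)%Z -> CF f g tau s c ->
  code c c' = face s c K -> angeq (pos f g c (E tau K)) (phi c c').
Proof.
  intros Hs HC H. rewrite phi_code. apply (event_link f g tau s); auto.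
  apply face_char; auto. apply code_range.
Qed.

Lemma E_inj tau K K' : E tau K = E tau K' -> K = K'.
Proof. unfold E. intros H. apply eq_IZR. lra. Qed.

Lemma E_lt tau K K' : E tau K < E tau K' -> (K < K')%Z.
Proof. unfold E. intros H. apply lt_IZR. lra. Qed.

Lemma E_le tau K K' : (K <= K')%Z -> E tau K <= E tau K'.
Proof. unfold E. intros H. apply IZR_le in H. lra. Qed.

Lemma no_event tau K t : E tau K < t < E tau (K+1) -> forall K', t <> E tau K'.
Proof. intros [H1 H2] K' ->. apply E_lt in H1. apply E_lt in H2. lia. Qed.

Lemma loc_const n m f g loc L tau s u a b : (s = 1 \/ s = -1)%Z ->
  (forall c, in_grid n m c -> CF f g tau s c) -> partial_scs_run n m f g loc L ->
  in_grid n m u -> L u = None -> 0 <= a ->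
  (forall t, a < t < b -> forall K, t <> E tau K) ->
  forall t, a <= t < b -> loc u t = loc u a.
Proof.
  intros Hs HCF [R1 [R2 R3]] Hu HL Ha Hno t Ht.
  assert (Hp : forall x, present L u x) by (intros; unfold present; rewrite HL; trivial).
  apply (const_interval (loc u) a t). lra.
  - intros x Hx. apply R2; auto; lra.
  - intros x Hx. destruct (R1 u x Hu ltac:(lra) (Hp x)) as [c Hc].
    assert (Hc' := Hc).
    destruct Hc' as [[Hx0 _]|[_ [e [He Hce]]]]. lra.
    exists e; split; auto. intros s0 Hs0. rewrite Hce by lra. symmetry.
    apply (proj2 (R3 u x c Hu ltac:(lra) (Hp x) Hc)).
    intros c' Hadj Hang. exfalso.
    destruct (link_at_event f g tau s c c' x Hs (HCF c (proj1 Hadj)) Hang) as [K [HK _]].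
    apply (Hno x ltac:(lra) K HK).
Qed.

Lemma transition n m f g loc L tau s w c K : (s = 1 \/ s = -1)%Z ->
  (forall c, in_grid n m c -> CF f g tau s c) -> partial_scs_run n m f g loc L ->
  starves n m f g loc L w -> in_grid n m w -> in_grid n m c ->
  0 < E tau K -> prev_at loc w (E tau K) c -> loc w (E tau K) = next n m s c K.
Proof.
  intros Hs HCF [R1 [R2 R3]] [HL Hst] Hw Hc HT Hprev.
  assert (Hp : present L w (E tau K)) by (unfold present; rewrite HL; trivial).
  destruct (R3 w (E tau K) c Hw ltac:(lra) Hp Hprev) as [Mv St].
  unfold next. destruct (hasnb n m c (face s c K)) eqn:Eh.
  - destruct (nb_adj n m c _ Hc (face_range _ _ _) Eh) as [Hadj Hcode].
    apply Mv; auto.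
    + apply (event_at_face f g tau s); auto.
    + apply (Hst (E tau K) c); auto. apply (event_at_face f g tau s); auto.
  - apply St. intros c' Hadj Hang. exfalso.
    destruct (link_at_event f g tau s c c' _ Hs (HCF c Hc) Hang) as [K' [HK' Hcode]].
    apply E_inj in HK'. subst K'.
    destruct (adj_nb n m c c' Hadj) as [_ Hh]. rewrite Hcode, Eh in Hh. discriminate.
Qed.

Lemma init_cases n m f g loc L w : partial_scs_run n m f g loc L ->
  in_grid n m w -> L w = None ->
  loc w 0 = w \/ (exists c', adj n m w c' /\ angeq (pos f g w 0) (phi w c') /\
     ~ occupied n m loc L c' 0 /\ loc w 0 = c').
Proof.
  intros [R1 [R2 R3]] Hw HL.
  assert (Hp : present L w 0) by (unfold present; rewrite HL; trivial).
  assert (Hprev : prev_at loc w 0 w) by (left; auto).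
  destruct (R3 w 0 w Hw (Rle_refl 0) Hp Hprev) as [Mv St].
  destruct (classic (exists c', adj n m w c' /\ angeq (pos f g w 0) (phi w c') /\
     ~ occupied n m loc L c' 0)) as [[c' [A [B Cc]]]|Hno].
  - right. exists c'. split; [exact A|split;[exact B|split;[exact Cc| apply Mv; auto]]].
  - left. apply St. intros c' A B. apply NNPP. intros Cc. apply Hno. exists c'; auto.
Qed.

Lemma init_grid n m f g loc L w : partial_scs_run n m f g loc L ->
  in_grid n m w -> L w = None -> in_grid n m (loc w 0).
Proof.
  intros Hr Hw HL. destruct (init_cases n m f g loc L w Hr Hw HL) as [->|[c' [A [_ [_ ->]]]]]; auto.
  apply A.
Qed.

Lemma occ_self n m loc L w : in_grid n m w -> L w = None -> occupied n m loc L w 0.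
Proof. intros Hw HL. exists w. split; auto. split. unfold present; rewrite HL; trivial.
  left; auto. Qed.

Lemma init_distinct n m f g loc L tau s u v : (s = 1 \/ s = -1)%Z ->
  (forall c, in_grid n m c -> CF f g tau s c) -> partial_scs_run n m f g loc L ->
  in_grid n m u -> in_grid n m v -> u <> v -> L u = None -> L v = None ->
  loc u 0 <> loc v 0.
Proof.
  intros Hs HCF Hr Hu Hv Huv HLu HLv.
  destruct (init_cases n m f g loc L u Hr Hu HLu) as [Eu|[cu [Au [Bu [Cu Eu]]]]];
  destruct (init_cases n m f g loc L v Hr Hv HLv) as [Ev|[cv [Av [Bv [Cv Ev]]]]];
  rewrite Eu, Ev.
  - exact Huv.
  - intros ->. apply Cv. apply occ_self; auto.
  - intros <-. apply Cu. apply occ_self; auto.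
  - intros <-.
    destruct (link_at_event f g tau s u cu 0 Hs (HCF u Hu) Bu) as [K [HK Ku]].
    destruct (link_at_event f g tau s v cu 0 Hs (HCF v Hv) Bv) as [K' [HK' Kv]].
    rewrite HK in HK'. apply E_inj in HK'. subst K'.
    assert (F1 := face_sym n m s u cu K Hs Au (eq_sym Ku)).
    assert (F2 := face_sym n m s v cu K Hs Av (eq_sym Kv)).
    destruct (adj_nb n m cu u (adj_sym _ _ _ _ Au)) as [E1 _].
    destruct (adj_nb n m cu v (adj_sym _ _ _ _ Av)) as [E2 _].
    apply Huv. rewrite E1, E2, <- F1, <- F2. reflexivity.
Qed.

Lemma E_S tau K : E tau K < E tau (K + 1).
Proof. unfold E. rewrite plus_IZR. simpl. lra. Qed.

Lemma sim n m f g loc L tau s K0 w : (s = 1 \/ s = -1)%Z ->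
  (forall c, in_grid n m c -> CF f g tau s c) -> partial_scs_run n m f g loc L ->
  starves n m f g loc L w -> in_grid n m w -> E tau K0 <= 0 -> 0 < E tau (K0 + 1) ->
  forall N, in_grid n m (traj n m s (loc w 0) (K0 + 1) N) /\
    forall t, Rmax 0 (E tau (K0 + Z.of_nat N)) <= t < E tau (K0 + Z.of_nat N + 1) ->
      loc w t = traj n m s (loc w 0) (K0 + 1) N.
Proof.
  intros Hs HCF Hr Hst Hw HK0 HK1.
  assert (HL : L w = None) by apply Hst.
  induction N as [|N [IHg IHl]].
  - split. apply (init_grid n m f g loc L w Hr Hw HL).
    simpl Z.of_nat. rewrite Z.add_0_r. rewrite Rmax_left by lra.
    intros t Ht. simpl. apply (loc_const n m f g loc L tau s w 0 (E tau (K0+1))); auto; try lra.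
    intros x Hx. apply (no_event tau K0). lra.
  - set (T := E tau (K0 + Z.of_nat N + 1)).
    assert (HT : 0 < T).
    { unfold T. eapply Rlt_le_trans. apply HK1. apply E_le. lia. }
    assert (HmT : Rmax 0 (E tau (K0 + Z.of_nat N)) < T).
    { apply Rmax_lub_lt. lra. apply E_S. }
    assert (Hprev : prev_at loc w T (traj n m s (loc w 0) (K0 + 1) N)).
    { right. split; auto. exists (T - Rmax 0 (E tau (K0 + Z.of_nat N))). split. lra.
      intros s0 Hs0. apply IHl. split. lra. apply Hs0. }
    assert (Htr := transition n m f g loc L tau s w _ (K0 + Z.of_nat N + 1) Hs HCF Hr Hst Hw IHg HT Hprev).
    fold T in Htr.
    assert (Eq : traj n m s (loc w 0) (K0 + 1) (S N) = next n m s (traj n m s (loc w 0) (K0 + 1) N) (K0 + Z.of_nat N + 1)).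
    { simpl. f_equal. lia. }
    rewrite Eq. split. apply next_grid; auto.
    replace (K0 + Z.of_nat (S N))%Z with (K0 + Z.of_nat N + 1)%Z by lia. fold T.
    rewrite Rmax_right by lra. intros t Ht.
    rewrite <- Htr. apply (loc_const n m f g loc L tau s w T (E tau (K0 + Z.of_nat N + 1 + 1))); auto; try lra.
    intros x Hx. apply (no_event tau (K0 + Z.of_nat N + 1)). unfold T in Hx. lra.
Qed.

Lemma prev_sim n m f g loc L tau s K0 w : (s = 1 \/ s = -1)%Z ->
  (forall c, in_grid n m c -> CF f g tau s c) -> partial_scs_run n m f g loc L ->
  starves n m f g loc L w -> in_grid n m w -> E tau K0 <= 0 -> 0 < E tau (K0 + 1) ->
  forall N, 0 < E tau (K0 + 1 + Z.of_nat N) /\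
    prev_at loc w (E tau (K0 + 1 + Z.of_nat N)) (traj n m s (loc w 0) (K0 + 1) N).
Proof.
  intros Hs HCF Hr Hst Hw HK0 HK1 N.
  destruct (sim n m f g loc L tau s K0 w Hs HCF Hr Hst Hw HK0 HK1 N) as [_ Hl].
  replace (K0 + 1 + Z.of_nat N)%Z with (K0 + Z.of_nat N + 1)%Z by lia.
  set (T := E tau (K0 + Z.of_nat N + 1)).
  assert (HT : 0 < T).
  { unfold T. eapply Rlt_le_trans. apply HK1. apply E_le. lia. }
  assert (HmT : Rmax 0 (E tau (K0 + Z.of_nat N)) < T).
  { apply Rmax_lub_lt. lra. apply E_S. }
  split; auto. right. split; auto. exists (T - Rmax 0 (E tau (K0 + Z.of_nat N))). split. lra.
  intros s0 Hs0. apply Hl. split. lra. apply Hs0.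
Qed.

Lemma floor_ex x : exists K : Z, IZR K <= x < IZR K + 1.
Proof. destruct (archimed x) as [H1 H2]. exists (up x - 1)%Z. rewrite minus_IZR. simpl. lra. Qed.

Theorem theorem9 (n m : nat) (f g : cell -> R)
    (loc : cell -> R -> cell) (L : cell -> option R) :
  sync_schedule n m f g ->
  partial_scs_run n m f g loc L ->
  forall u v : cell, in_grid n m u -> in_grid n m v -> u <> v ->
  starves n m f g loc L u -> starves n m f g loc L v ->
  forall t, 0 <= t -> fst (loc u t) <> fst (loc v t).
Proof.
  intros Hsync Hr u v Hu Hv Huv Hsu Hsv t0 Ht0 Hrow.
  assert (Hn : (0 < n)%nat) by (unfold in_grid in Hu; lia).
  assert (Hm : (0 < m)%nat) by (unfold in_grid in Hu; lia).
  destruct (closed_form n m f g Hsync Hn Hm) as [tau [s [Hs HCF]]].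
  destruct (floor_ex (-4 * tau)) as [K0 HK0].
  assert (HE0 : E tau K0 <= 0) by (unfold E; lra).
  assert (HE1 : 0 < E tau (K0 + 1)) by (unfold E; rewrite plus_IZR; simpl; lra).
  destruct (floor_ex (4 * (t0 - tau))) as [K1 HK1].
  assert (HEt : E tau K1 <= t0 < E tau (K1 + 1)) by (unfold E; rewrite plus_IZR; simpl; split; lra).
  assert (HK01 : (K0 <= K1)%Z).
  { assert (E tau K0 < E tau (K1 + 1)) by lra. apply E_lt in H. lia. }
  set (su := traj n m s (loc u 0) (K0 + 1)).
  set (sv := traj n m s (loc v 0) (K0 + 1)).
  assert (HLu : L u = None) by apply Hsu.
  assert (HLv : L v = None) by apply Hsv.
  assert (NoMeet : forall (w w' : cell) (sw sw' : nat -> cell), starves n m f g loc L w ->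
     in_grid n m w -> in_grid n m w' -> L w' = None ->
     sw = traj n m s (loc w 0) (K0 + 1) -> sw' = traj n m s (loc w' 0) (K0 + 1) ->
     starves n m f g loc L w' ->
     forall N, ~ meet n m s (sw N) (sw' N) (K0 + 1 + Z.of_nat N)).
  { intros w w' sw sw' Hstw Hw Hw' HLw' -> -> Hstw' N [Hadj Hface].
    destruct (prev_sim n m f g loc L tau s K0 w Hs HCF Hr Hstw Hw HE0 HE1 N) as [HT Hp].
    destruct (prev_sim n m f g loc L tau s K0 w' Hs HCF Hr Hstw' Hw' HE0 HE1 N) as [_ Hp'].
    apply (proj2 Hstw _ _ _ HT Hp Hadj).
    - apply (event_at_face f g tau s); auto. apply HCF. apply Hadj.
    - exists w'. split; auto. split; auto. unfold present; rewrite HLw'; trivial. }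
  assert (NM1 : forall N, ~ meet n m s (su N) (sv N) (K0 + 1 + Z.of_nat N))
    by (apply (NoMeet u v); auto).
  assert (NM2 : forall N, ~ meet n m s (sv N) (su N) (K0 + 1 + Z.of_nat N))
    by (apply (NoMeet v u); auto).
  assert (Gu : forall N, in_grid n m (su N))
    by (intro N; apply (sim n m f g loc L tau s K0 u Hs HCF Hr Hsu Hu HE0 HE1 N)).
  assert (Gv : forall N, in_grid n m (sv N))
    by (intro N; apply (sim n m f g loc L tau s K0 v Hs HCF Hr Hsv Hv HE0 HE1 N)).
  assert (Dist : forall N, su N <> sv N).
  { induction N.
    - simpl. apply (init_distinct n m f g loc L tau s); auto.
    - unfold su, sv. simpl. fold su sv.
      replace (K0 + 1 + Z.of_nat N)%Z with (K0 + 1 + Z.of_nat N)%Z by reflexivity.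
      apply next_inj; auto. }
  set (N := Z.to_nat (K1 - K0)).
  assert (HN : (K0 + Z.of_nat N = K1)%Z) by (unfold N; lia).
  destruct (sim n m f g loc L tau s K0 u Hs HCF Hr Hsu Hu HE0 HE1 N) as [_ Lu].
  destruct (sim n m f g loc L tau s K0 v Hs HCF Hr Hsv Hv HE0 HE1 N) as [_ Lv].
  rewrite HN in Lu, Lv.
  assert (Ht : Rmax 0 (E tau K1) <= t0 < E tau (K1 + 1)).
  { split. apply Rmax_lub; lra. lra. }
  rewrite (Lu t0 Ht), (Lv t0 Ht) in Hrow. fold su sv in Hrow.
  destruct (same_row_meet n m s (su N) (sv N) (K0 + 1 + Z.of_nat N) Hs (Gu N) (Gv N) Hrow (Dist N))
    as [N' HM].
  assert (Eu : traj n m s (su N) (K0 + 1 + Z.of_nat N) N' = su (N + N')%nat)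
    by (unfold su; rewrite traj_shift; reflexivity).
  assert (Ev : traj n m s (sv N) (K0 + 1 + Z.of_nat N) N' = sv (N + N')%nat)
    by (unfold sv; rewrite traj_shift; reflexivity).
  rewrite Eu, Ev in HM.
  replace (K0 + 1 + Z.of_nat N + Z.of_nat N')%Z with (K0 + 1 + Z.of_nat (N + N'))%Z in HM by lia.
  destruct HM as [HM|HM]; [apply (NM1 _ HM) | apply (NM2 _ HM)].
Qed.
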